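(* Let $N\ge 2$, let $s=(s_1,\dots,s_{N-1})\in\mathbb{C}^{N-1}$ be generic, set $x_a=2s_a-2s_{a-1}$ ($1\le a\le N$, $s_0=s_N=0$), and let $$F(s)=\mathbb{1}\otimes\mathbb{1}-\sum_{1\le a<b\le N}\frac{2}{x_a-x_b}\,E_{ab}\otimes E_{ba}.$$ Let $R(u)=\dfrac{\rho(u)}{u+1}\big(u\,\mathbb{1}\otimes\mathbb{1}+P\big)$ be the (normalised) Yang $R$-matrix of the double Yangian of $sl_N$ in the fundamental representation, with $$\rho(u)=\frac{\Gamma_1(u|N)\,\Gamma_1(u+N|N)}{\Gamma_1(u+1|N)\,\Gamma_1(u+N-1|N)}.$$ Then $R(u,s):=F_{21}(s)\,R(u)\,F_{12}(s)^{-1}$, written as $\sum R_{i_1i_2}^{j_1j_2}E_{i_1j_1}\otimes E_{i_2j_2}$, has non-vanishing entries ($1\le a,b\le N$, $a\ne b$ in the last two) $$R_{aa}^{aa}=\rho(u),\qquad R_{ab}^{ab}=\rho(u)\begin{cases}\dfrac{u}{u+1}& b>a,\\[2mm] \Big(1-\dfrac{4}{(x_a-x_b)^2}\Big)\dfrac{u}{u+1} & b<a,\end{cases}\qquad R_{ab}^{ba}=\rho(u)\Big(1+\frac{2u}{x_a-x_b}\Big)\frac{1}{u+1},$$ and it satisfies the dynamical Yang--Baxter equation with additive spectral parameter $$R_{12}(\beta,s+h^{(3)})\,R_{13}(\beta+\beta',s)\,R_{23}(\beta',s+h^{(1)})=R_{23}(\beta',s)\,R_{13}(\beta+\beta',s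+h^{(2)})\,R_{12}(\beta,s).$$
   Context: $E_{ab}$ is the $N\times N$ elementary matrix, $P$ the flip of $\mathbb{C}^N\otimes\mathbb{C}^N$, $F_{21}=PF_{12}P$. $\Gamma_1(x|\omega)=\frac{\omega^{x/\omega}}{\sqrt{2\pi\omega}}\Gamma(x/\omega)$. Shift notation: with $h_j=E_{jj}-E_{j+1,j+1}$, $(d_{ij})$ the inverse Cartan matrix of $sl_N$ and $h^\vee_i=\sum_j d_{ij}h_j$, the expression $R_{12}(\beta,s+h^{(3)})$ means $R_{12}(\beta,s)$ with each $s_i$ replaced by $s_i+h^\vee_i$ acting (diagonally) in the third tensor factor of $(\mathbb{C}^N)^{\otimes3}$; similarly for $h^{(1)},h^{(2)}$. *)

(* Defs.v *)
From HB Require Import structures.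
From mathcomp Require Import all_boot all_order all_algebra.
From mathcomp Require Import all_classical all_reals all_analysis.
From mathcomp Require Import complex.

Set Implicit Arguments.
Unset Strict Implicit.
Unset Printing Implicit Defensive.

Import Order.TTheory GRing.Theory Num.Theory.
Import numFieldNormedType.Exports.
Local Open Scope ring_scope.
Local Open Scope complex_scope.

Section Defs.
Variable R : realType.
Local Notation C := R[i].

Definition expC (z : C) : C :=
  (expR (complex.Re z) * cos (complex.Im z)) +i* (expR (complex.Re z) * sin (complex.Im z)).

Definition powC (w : R) (z : C) : C := expC (z * (ln w)%:C).

(* Gauss' product formula: Gamma(z) = lim_n n^z n! / (z (z+1) ... (z+n)) *)
Definition gauss_seq (z : C) (n : nat) : C :=
  powC n%:R z * (n`!)%:R / \prod_(k < n.+1) (z + k%:R).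

Definition GammaC (z : C) : C :=
  (limn (fun n => complex.Re (gauss_seq z n))) +i* (limn (fun n => complex.Im (gauss_seq z n))).

Definition Gamma1 (x : C) (w : R) : C :=
  powC w (x / w%:C) / (Num.sqrt (2 * pi * w))%:C * GammaC (x / w%:C).

Definition rho (N : nat) (u : C) : C :=
  let w := (N%:R : R) in
  Gamma1 u w * Gamma1 (u + N%:R) w /
  (Gamma1 (u + 1) w * Gamma1 (u + N%:R - 1) w).

Definition op2 (N : nat) := 'M[C]_#|{: 'I_N * 'I_N}|.
Definition op3 (N : nat) := 'M[C]_#|{: 'I_N * 'I_N * 'I_N}|.

Definition idx2 N (i1 i2 : 'I_N) : 'I_#|{: 'I_N * 'I_N}| := enum_rank (i1, i2).

(* the entry R_{i1 i2}^{j1 j2} of R = sum R_{i1i2}^{j1j2} E_{i1j1} (x) E_{i2j2} *)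
Definition entry2 N (M : op2 N) (i1 i2 j1 j2 : 'I_N) : C :=
  M (idx2 i1 i2) (idx2 j1 j2).

Definition Emx N (a b : 'I_N) : 'M[C]_N := delta_mx a b.

Definition tens2 N (A B : 'M[C]_N) : op2 N :=
  \matrix_(i, j) (A (enum_val i).1 (enum_val j).1 * B (enum_val i).2 (enum_val j).2).

Definition flip N : op2 N := \sum_(a < N) \sum_(b < N) tens2 (Emx a b) (Emx b a).

Definition op21 N (X : op2 N) : op2 N := flip N *m X *m flip N.

(* The argument is a family of operators indexed
   by the basis vector of the remaining factor, which acts diagonally; this
   encodes the shifts s + h^{(k)}.  Un-shifted operators are constant families. *)
Definition lift12 N (f : 'I_N -> op2 N) : op3 N :=
  \matrix_(i, j) (let: (i1, i2, i3) := enum_val i in let: (j1, j2, j3) := enum_val j in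
                  f i3 (idx2 i1 i2) (idx2 j1 j2) * (i3 == j3)%:R).
Definition lift13 N (f : 'I_N -> op2 N) : op3 N :=
  \matrix_(i, j) (let: (i1, i2, i3) := enum_val i in let: (j1, j2, j3) := enum_val j in
                  f i2 (idx2 i1 i3) (idx2 j1 j3) * (i2 == j2)%:R).
Definition lift23 N (f : 'I_N -> op2 N) : op3 N :=
  \matrix_(i, j) (let: (i1, i2, i3) := enum_val i in let: (j1, j2, j3) := enum_val j in
                  f i1 (idx2 i2 i3) (idx2 j2 j3) * (i1 == j1)%:R).

(* s = (s_1, ..., s_{N-1}) is a function 'I_N.-1 -> C, s_i = s (i-1);
   sext s k = s_k with the convention s_0 = s_N = 0 *)
Definition sext N (s : 'I_N.-1 -> C) (k : nat) : C :=
  match k with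
  | 0 => 0
  | k'.+1 => if @insub nat (fun m => (m < N.-1)%N) 'I_N.-1 k' is Some i then s i else 0
  end.

(* x_a = 2 s_a - 2 s_{a-1}, for a = 1..N (a : 'I_N stands for a+1) *)
Definition xvar N (s : 'I_N.-1 -> C) (a : 'I_N) : C :=
  2 * sext s a.+1 - 2 * sext s a.

Definition Fmx N (s : 'I_N.-1 -> C) : op2 N :=
  1%:M - \sum_(a < N) \sum_(b < N | (a < b)%N)
           (2 / (xvar s a - xvar s b)) *: tens2 (Emx a b) (Emx b a).

Definition Ryang N (u : C) : op2 N := (rho N u / (u + 1)) *: (u *: 1%:M + flip N).

Definition Rdyn N (u : C) (s : 'I_N.-1 -> C) : op2 N :=
  op21 (Fmx s) *m Ryang N u *m invmx (Fmx s).

(* Cartan matrix of sl_N (indices i : 'I_N.-1 stand for i+1) and its inverse d_ij *)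
Definition cartan N : 'M[C]_N.-1 :=
  \matrix_(i, j) (if i == j then 2 else if (i.+1 == j) || (j.+1 == i) then -1 else 0).
Definition invcartan N : 'M[C]_N.-1 := invmx (cartan N).

(* eigenvalue of h_j = E_jj - E_{j+1,j+1} on the basis vector e_k *)
Definition h_ev N (j : 'I_N.-1) (k : 'I_N) : C :=
  ((j : nat) == k)%:R - (j.+1 == k)%:R.

Definition hvee_ev N (i : 'I_N.-1) (k : 'I_N) : C :=
  \sum_(j < N.-1) invcartan N i j * h_ev j k.

(* s + h^vee evaluated on the basis vector e_k of the acting factor *)
Definition sshift N (s : 'I_N.-1 -> C) (k : 'I_N) : 'I_N.-1 -> C :=
  fun i => s i + hvee_ev i k.

End Defs.

(* Main.v *)
Require Import Defs.
From HB Require Import structures.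
From mathcomp Require Import all_boot all_order all_algebra.
From mathcomp Require Import all_classical all_reals all_analysis.
From mathcomp Require Import complex.
From mathcomp Require Import ring lra zify.

Set Implicit Arguments.
Unset Strict Implicit.
Unset Printing Implicit Defensive.

Import Order.TTheory GRing.Theory Num.Theory.
Import numFieldNormedType.Exports.
Local Open Scope ring_scope.
Local Open Scope complex_scope.

Section Infra.
Variable R : realType.
Local Notation C := R[i].
Variable N : nat.
Local Notation T2 := ('I_N * 'I_N)%type.
Local Notation T3 := ('I_N * 'I_N * 'I_N)%type.

Lemma sum_rank (T : finType) (F : 'I_#|T| -> C) :
  \sum_(k < #|T|) F k = \sum_(t : T) F (enum_rank t).
Proof.
rewrite (reindex (@enum_rank T)) //.
exists enum_val => x _; [exact: enum_rankK | exact: enum_valK].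
Qed.

Lemma sum_only (T : finType) (a : T) (F : T -> C) :
  (forall x, x != a -> F x = 0) -> \sum_x F x = F a.
Proof.
move=> H; rewrite (bigD1 a) //= big1 ?addr0 // => x /andP[_]; exact: H.
Qed.

Lemma sum_delta (T : finType) (a : T) (F : T -> C) :
  \sum_x ((x == a)%:R * F x) = F a.
Proof.
rewrite (@sum_only _ a) ?eqxx ?mul1r // => x /negbTE ->; by rewrite mul0r.
Qed.

Definition ef2 (M : op2 R N) (a b c e : 'I_N) : C := entry2 M a b c e.

Lemma ef2_ext (M M' : op2 R N) :
  (forall a b c e, ef2 M a b c e = ef2 M' a b c e) -> M = M'.
Proof.
move=> H; apply/matrixP => i j.
rewrite -(enum_valK i) -(enum_valK j).
case: (enum_val i) => a b; case: (enum_val j) => c e.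
exact: H.
Qed.

Lemma ef2_mul (A B : op2 R N) a b c e :
  ef2 (A *m B) a b c e = \sum_p \sum_q ef2 A a b p q * ef2 B p q c e.
Proof.
rewrite /ef2 /entry2 mxE sum_rank pair_bigA /=.
by apply: eq_bigr => -[p q] _.
Qed.

Definition sp2 (al be : 'I_N -> 'I_N -> C) : op2 R N :=
  \matrix_(i, j) (al (enum_val i).1 (enum_val i).2 *
                    (((enum_val j).1 == (enum_val i).1) && ((enum_val j).2 == (enum_val i).2))%:R
                + be (enum_val i).1 (enum_val i).2 *
                    (((enum_val j).1 == (enum_val i).2) && ((enum_val j).2 == (enum_val i).1))%:R).

Lemma ef2_sp2 al be a b c e :
  ef2 (sp2 al be) a b c e = al a b * ((c == a) && (e == b))%:R + be a b * ((c == b) && (e == a))%:R.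
Proof. by rewrite /ef2 /entry2 /idx2 mxE !enum_rankK. Qed.

Lemma sum2_delta (p q : 'I_N) (F : 'I_N -> 'I_N -> C) :
  \sum_x \sum_y (((x == p) && (y == q))%:R * F x y) = F p q.
Proof.
rewrite pair_bigA /=.
rewrite (@sum_only _ (p, q)) /= ?eqxx ?mul1r // => -[x y] /=.
by rewrite -xpair_eqE => /negbTE ->; rewrite mul0r.
Qed.

Lemma sp2_mul al be al' be' :
  sp2 al be *m sp2 al' be' =
  sp2 (fun a b => al a b * al' a b + be a b * be' b a)
      (fun a b => al a b * be' a b + be a b * al' b a).
Proof.
apply: ef2_ext => a b c e; rewrite ef2_mul ef2_sp2.
under eq_bigr do under eq_bigr do rewrite !ef2_sp2 mulrDl -!mulrA (mulrCA (al a b)) (mulrCA (be a b)).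
under eq_bigr do rewrite big_split /=.
rewrite big_split /= !sum2_delta /=.
ring.
Qed.

Lemma sp2_scale (k : C) al be :
  k *: sp2 al be = sp2 (fun a b => k * al a b) (fun a b => k * be a b).
Proof.
apply: ef2_ext => a b c e; rewrite /ef2 /entry2 /idx2 !mxE !enum_rankK /=; ring.
Qed.

Lemma sp2_add al be al' be' :
  sp2 al be + sp2 al' be' = sp2 (fun a b => al a b + al' a b) (fun a b => be a b + be' a b).
Proof.
apply: ef2_ext => a b c e; rewrite /ef2 /entry2 /idx2 !mxE !enum_rankK /=; ring.
Qed.

Lemma sp2_one : (1%:M : op2 R N) = sp2 (fun _ _ => 1) (fun _ _ => 0).
Proof.
apply: ef2_ext => a b c e; rewrite ef2_sp2 /ef2 /entry2 /idx2 mxE.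
rewrite (inj_eq enum_rank_inj) xpair_eqE (eq_sym c) (eq_sym e); ring.
Qed.

Lemma ef2_tens (x y z w a b c e : 'I_N) :
  ef2 (tens2 (Emx R x y) (Emx R z w)) a b c e =
  ((a == x) && (c == y))%:R * ((b == z) && (e == w))%:R.
Proof. by rewrite /ef2 /entry2 /idx2 /tens2 /Emx !mxE !enum_rankK /=. Qed.

Lemma ef2_sum (I : finType) (P : pred I) (F : I -> op2 R N) a b c e :
  ef2 (\sum_(i | P i) F i) a b c e = \sum_(i | P i) ef2 (F i) a b c e.
Proof. by rewrite /ef2 /entry2 summxE. Qed.

Lemma ef2_sub (A B : op2 R N) a b c e : ef2 (A - B) a b c e = ef2 A a b c e - ef2 B a b c e.
Proof. by rewrite /ef2 /entry2 !mxE. Qed.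
Lemma ef2_add (A B : op2 R N) a b c e : ef2 (A + B) a b c e = ef2 A a b c e + ef2 B a b c e.
Proof. by rewrite /ef2 /entry2 !mxE. Qed.
Lemma ef2_scale k (A : op2 R N) a b c e : ef2 (k *: A) a b c e = k * ef2 A a b c e.
Proof. by rewrite /ef2 /entry2 !mxE. Qed.

Lemma sp2_flip : flip R N = sp2 (fun _ _ => 0) (fun _ _ => 1).
Proof.
apply: ef2_ext => a b c e; rewrite ef2_sp2 /flip ef2_sum.
under eq_bigr do rewrite ef2_sum.
under eq_bigr do under eq_bigr do rewrite ef2_tens.
rewrite (@sum_only _ a); last first.
  by move=> x /negbTE xa; apply: big1 => y _; rewrite [a == x]eq_sym xa /= mul0r.
rewrite (@sum_only _ b); last first.
  by move=> y /negbTE yb; rewrite [b == y]eq_sym yb /= mulr0.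
rewrite !eqxx /= mul0r add0r !mul1r -natrM mulnb (eq_sym c b) (eq_sym e a).
by [].
Qed.

Definition kk (D : 'I_N -> 'I_N -> C) (a b : 'I_N) : C :=
  if a == b then 0 else 2 / D a b.

Lemma sp2_F (s : 'I_N.-1 -> C) :
  Fmx s = sp2 (fun _ _ => 1)
              (fun a b => - (if (a < b)%N then 2 / (xvar s a - xvar s b) else 0)).
Proof.
rewrite /Fmx sp2_one.
apply: ef2_ext => a b c e; rewrite ef2_sub !ef2_sp2 ef2_sum.
under eq_bigr do rewrite ef2_sum.
under eq_bigr do under eq_bigr do rewrite ef2_scale ef2_tens.
rewrite (@sum_only _ a); last first.
  by move=> x /negbTE xa; apply: big1 => y _; rewrite [a == x]eq_sym xa /= mul0r mulr0.
rewrite big_mkcond /= (@sum_only _ b); last first.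
  by move=> y /negbTE yb; case: ifP => //; rewrite [b == y]eq_sym yb /= mulr0 mulr0.
rewrite !eqxx /= (eq_sym c b) (eq_sym e a).
case: ifP => _; rewrite -?natrM ?mulnb; ring.
Qed.

Definition Mal (u : C) (D : 'I_N -> 'I_N -> C) (a b : 'I_N) : C :=
  u * (1 - (if (b < a)%N then kk D a b ^+ 2 else 0)).
Definition Mbe (u : C) (D : 'I_N -> 'I_N -> C) (a b : 'I_N) : C :=
  1 + u * kk D a b.
Definition Msp u D := sp2 (Mal u D) (Mbe u D).

Lemma invF (s : 'I_N.-1 -> C) :
  invmx (Fmx s) = sp2 (fun _ _ => 1)
              (fun a b => (if (a < b)%N then 2 / (xvar s a - xvar s b) else 0)).
Proof.
set G := sp2 _ _.
have FG : Fmx s *m G = 1%:M.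
  rewrite sp2_F sp2_mul sp2_one; congr sp2; apply/funext => a; apply/funext => b.
    by case: (ltngtP a b) => _; ring.
  by ring.
have [Fu _] := mulmx1_unit FG.
by rewrite -[RHS]mul1mx -(mulVmx Fu) -mulmxA FG mulmx1.
Qed.

Lemma Rdyn_sp (u : C) (s : 'I_N.-1 -> C) :
  Rdyn u s = (rho N u / (u + 1)) *: Msp u (fun a b => xvar s a - xvar s b).
Proof.
rewrite /Rdyn /op21 /Ryang invF sp2_F sp2_flip sp2_one /Msp.
rewrite sp2_scale sp2_add !sp2_scale !sp2_mul.
congr sp2; apply/funext => a; apply/funext => b; rewrite /Mal /Mbe /kk;
  case: (ltngtP a b) => h.
- have nab : (a == b) = false by apply/eqP => E; move: h; rewrite E ltnn.
  by rewrite ?nab /=; ring.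
- have nab : (a == b) = false by apply/eqP => E; move: h; rewrite E ltnn.
  by rewrite ?nab /= -[xvar s b - _]opprB invrN mulrN; ring.
- by ring.
- have nab : (a == b) = false by apply/eqP => E; move: h; rewrite E ltnn.
  by rewrite ?nab /=; ring.
- have nab : (a == b) = false by apply/eqP => E; move: h; rewrite E ltnn.
  by rewrite ?nab /= -[xvar s b - _]opprB invrN mulrN; ring.
- have -> : a = b by apply: val_inj.
  by rewrite eqxx /=; ring.
Qed.

Ltac splitb := repeat match goal with
 | H : ?x <> ?x |- _ => by case: H
 | |- context [?x == ?y] => case: (x =P y) => [?|?]; try subst
end.

Lemma part1 (s : 'I_N.-1 -> C) :
  (forall a b : 'I_N, a != b ->
     [/\ xvar s a - xvar s b != 0, xvar s a - xvar s b != 2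
       & xvar s a - xvar s b != -2]) ->
  (forall (u : C), u + 1 != 0 ->
     forall i1 i2 j1 j2 : 'I_N,
       entry2 (Rdyn u s) i1 i2 j1 j2 =
       if (i1 == i2) && (j1 == i1) && (j2 == i1) then rho N u
       else if (i1 != i2) && (j1 == i1) && (j2 == i2) then
         (if (i1 < i2)%N then rho N u * (u / (u + 1))
          else rho N u * ((1 - 4 / (xvar s i1 - xvar s i2) ^+ 2) * (u / (u + 1))))
       else if (i1 != i2) && (j1 == i2) && (j2 == i1) then
         rho N u * ((1 + 2 * u / (xvar s i1 - xvar s i2)) * (1 / (u + 1)))
       else 0).
Proof.
move=> gen u u1 i1 i2 j1 j2.
rewrite Rdyn_sp -/(ef2 _ i1 i2 j1 j2) ef2_scale ef2_sp2 /Mal /Mbe /kk.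
splitb; rewrite ?ltnn /=.
all: try (ring; done).
  by field.
have [d0 _ _] : [/\ xvar s i1 - xvar s i2 != 0, xvar s i1 - xvar s i2 != 2
       & xvar s i1 - xvar s i2 != -2].
  by apply: gen; apply/eqP; match goal with H : i1 <> i2 |- _ => exact: H end.
case: (ltngtP i1 i2) => h.
- by field; rewrite u1 d0.
- by field; rewrite u1 d0.
- exfalso; match goal with H : i1 <> i2 |- _ => by apply: H; apply: val_inj end.
Qed.

End Infra.

Section Shift.
Variable R : realType.
Local Notation C := R[i].
Variable N : nat.
Hypothesis N2 : (2 <= N)%N.

Lemma sum_nat_delta M (n : nat) (f : nat -> C) :
  \sum_(j < M) (((j : nat) == n)%:R * f j) = (n < M)%N%:R * f n.
Proof.
elim: M => [|M IH]; first by rewrite big_ord0 ltn0 mul0r.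
rewrite big_ord_recr /= IH ltnS [(n <= M)%N]leq_eqVlt (eq_sym M).
case: (n =P M) => [->|h] /=.
- by rewrite ltnn mul0r add0r mul1r.
- by rewrite mul0r addr0.
Qed.

Lemma sum_nat_delta1 M (n : nat) (f : nat -> C) :
  \sum_(j < M) (((j : nat).+1 == n)%:R * f j) = (0 < n)%N%:R * (n.-1 < M)%N%:R * f n.-1.
Proof.
case: n => [|n] /=.
  by rewrite big1 ?mul0r // => j _; rewrite mul0r.
by under eq_bigr do rewrite eqSS; rewrite sum_nat_delta mul1r.
Qed.

Definition Gf (p q : nat) : C := (minn p q)%:R - (p * q)%:R / N%:R.

Lemma NC : (N%:R : C) != 0.
Proof. by rewrite pnatr_eq0 -lt0n; apply: leq_trans N2. Qed.

Lemma Gf0 q : Gf 0 q = 0.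
Proof. by rewrite /Gf min0n mul0n mul0r subr0. Qed.
Lemma Gf0r q : Gf q 0 = 0.
Proof. by rewrite /Gf minn0 muln0 mul0r subr0. Qed.
Lemma GfN q : (q <= N)%N -> Gf N q = 0.
Proof.
move=> h; rewrite /Gf (minn_idPr h) natrM mulrAC divff ?NC // mul1r subrr //.
Qed.
Lemma GfNr q : (q <= N)%N -> Gf q N = 0.
Proof.
move=> h; rewrite /Gf (minn_idPl h) natrM -mulrA divff ?NC // mulr1 subrr //.
Qed.

Lemma cartan_entry (i k : nat) :
  (if i == k then 2 else if (i.+1 == k) || (k.+1 == i) then -1 else 0 : C) =
  2 * (k == i)%:R - (k == i.+1)%:R - (k.+1 == i)%:R.
Proof.
case: (i =P k) => H1; case: (i.+1 =P k) => H2; case: (k.+1 =P i) => H3;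
  case: (k =P i) => H4; case: (k =P i.+1) => H5; rewrite /=;
  try (exfalso; lia); ring.
Qed.

Definition Dp : 'M[C]_N.-1 := \matrix_(i, j) Gf i.+1 j.+1.

Lemma cartan_Dp : cartan R N *m Dp = 1%:M.
Proof.
apply/matrixP => i j; rewrite !mxE.
under eq_bigr => k _ do rewrite !mxE cartan_entry !mulrBl -mulrA.
rewrite !sumrB -mulr_sumr.
rewrite (sum_nat_delta _ _ (fun k => Gf k.+1 j.+1)).
rewrite (sum_nat_delta _ _ (fun k => Gf k.+1 j.+1)).
rewrite (sum_nat_delta1 _ _ (fun k => Gf k.+1 j.+1)).
rewrite -(inj_eq val_inj) /=.
case: i => i iM; case: j => j jM /=.
have NM : N.-1.+1 = N by case: N N2.
rewrite iM.
have -> : (i.+1 < N.-1)%N%:R * Gf i.+2 j.+1 = Gf i.+2 j.+1.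
  case: (ltnP i.+1 N.-1) => h; first by rewrite mul1r.
  have -> : i.+2 = N by lia.
  by rewrite GfN ?mul0r //; lia.
have -> : (0 < i)%N%:R * (i.-1 < N.-1)%N%:R * Gf i.-1.+1 j.+1 = Gf i j.+1.
  case: i iM => [|i] iM /=; first by rewrite !mul0r Gf0.
  by rewrite (ltnW iM) !mul1r.
rewrite /Gf.
case: (ltngtP i j) => h.
- have -> : minn i.+1 j.+1 = i.+1 by apply/minn_idPl; lia.
  have -> : minn i.+2 j.+1 = i.+2 by apply/minn_idPl; lia.
  have -> : minn i j.+1 = i by apply/minn_idPl; lia.
  rewrite !natrM /=.
  field; exact: NC.
- have -> : minn i.+1 j.+1 = j.+1 by apply/minn_idPr; lia.
  have -> : minn i.+2 j.+1 = j.+1 by apply/minn_idPr; lia.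
  have -> : minn i j.+1 = j.+1 by apply/minn_idPr; lia.
  rewrite !natrM /=.
  field; exact: NC.
- subst j.
  have -> : minn i.+1 i.+1 = i.+1 by apply/minn_idPr; lia.
  have -> : minn i.+2 i.+1 = i.+1 by apply/minn_idPr; lia.
  have -> : minn i i.+1 = i by apply/minn_idPl; lia.
  rewrite !natrM /=.
  field; exact: NC.
Qed.

Lemma invcartan_Dp : invcartan R N = Dp.
Proof.
have [Cu _] := mulmx1_unit cartan_Dp.
by rewrite /invcartan -[RHS]mul1mx -(mulVmx Cu) -mulmxA cartan_Dp mulmx1.
Qed.

Lemma hvee_evE (i : 'I_N.-1) (k : 'I_N) :
  @hvee_ev R N i k = Gf i.+1 k.+1 - Gf i.+1 k.
Proof.
rewrite /hvee_ev invcartan_Dp /h_ev.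
under eq_bigr => j _ do rewrite mxE mulrBr (mulrC _ ((j : nat) == k)%:R) (mulrC _ (j.+1 == k)%:R).
rewrite sumrB (sum_nat_delta _ _ (fun j => Gf i.+1 j.+1)) (sum_nat_delta1 _ _ (fun j => Gf i.+1 j.+1)).
have kN := ltn_ord k; have iN := ltn_ord i.
have NM : N.-1.+1 = N by case: N N2.
congr (_ - _).
  case: (ltnP k N.-1) => h; first by rewrite mul1r.
  have -> : k.+1 = N by lia.
  by rewrite GfNr ?mul0r //; lia.
case: (k : nat) kN => [|k'] kN /=; first by rewrite !mul0r Gf0r.
have -> : (k' < N.-1)%N by lia.
by rewrite !mul1r.
Qed.

Lemma sext_shift (s : 'I_N.-1 -> C) (k : 'I_N) (p : nat) : (p <= N)%N ->
  sext (sshift s k) p = sext s p + Gf p k.+1 - Gf p k.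
Proof.
move=> pN; case: p pN => [|p] pN /=.
  by rewrite !Gf0 subr0 addr0.
case: insubP => [i ip ie|ip].
  by rewrite /sshift hvee_evE -ie addrA.
have -> : p.+1 = N by lia.
have kN := ltn_ord k; rewrite (GfN kN) (GfN (ltnW kN)); ring.
Qed.

Lemma xvar_shift (s : 'I_N.-1 -> C) (k a : 'I_N) :
  xvar (sshift s k) a = xvar s a + 2 * (a == k)%:R - 2 / N%:R.
Proof.
have aN := ltn_ord a; have kN := ltn_ord k.
rewrite /xvar !sext_shift //; last by lia.
rewrite /Gf -(inj_eq val_inj) /=.
case: (ltngtP (a : nat) k) => h.
- have e1 : minn a.+1 k.+1 = a.+1 by apply/minn_idPl; lia.
  have e2 : minn a.+1 k = a.+1 by apply/minn_idPl; lia.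
  have e3 : minn a k.+1 = a by apply/minn_idPl; lia.
  have e4 : minn a k = a by apply/minn_idPl; lia.
  rewrite ?e1 ?e2 ?e3 ?e4 ?e5 ?e6 ?e7 ?e8 ?e9 ?e10 ?e11 ?e12 !natrM /=.
  field; exact: NC.
- have e4 : minn a.+1 k.+1 = k.+1 by apply/minn_idPr; lia.
  have e5 : minn a.+1 k = k by apply/minn_idPr; lia.
  have e6 : minn a k.+1 = k.+1 by apply/minn_idPr; lia.
  have e7 : minn a k = k by apply/minn_idPr; lia.
  rewrite ?e1 ?e2 ?e3 ?e4 ?e5 ?e6 ?e7 ?e8 ?e9 ?e10 ?e11 ?e12 !natrM /=.
  field; exact: NC.
- rewrite h.
  have e8 : minn k.+1 k.+1 = k.+1 by apply/minn_idPr; lia.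
  have e9 : minn k.+1 k = k by apply/minn_idPr; lia.
  have e10 : minn k k.+1 = k by apply/minn_idPl; lia.
  have e11 : minn k k = k by apply/minn_idPl; lia.
  rewrite ?e1 ?e2 ?e3 ?e4 ?e5 ?e6 ?e7 ?e8 ?e9 ?e10 ?e11 ?e12 !natrM ?eqxx /=.
  field; exact: NC.
Qed.

Lemma xdiff_shift (s : 'I_N.-1 -> C) (k a b : 'I_N) :
  xvar (sshift s k) a - xvar (sshift s k) b =
  xvar s a - xvar s b + 2 * (a == k)%:R - 2 * (b == k)%:R.
Proof. rewrite !xvar_shift; ring. Qed.
End Shift.

Section Three.
Variable R : realType.
Local Notation C := R[i].
Variable N : nat.
Local Notation T3 := ('I_N * 'I_N * 'I_N)%type.

Definition ef3 (M : op3 R N) (I J : T3) : C := M (enum_rank I) (enum_rank J).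

Lemma ef3_ext (M M' : op3 R N) :
  (forall I J, ef3 M I J = ef3 M' I J) -> M = M'.
Proof.
move=> H; apply/matrixP => i j.
by rewrite -(enum_valK i) -(enum_valK j); apply: H.
Qed.

Lemma ef3_mul (A B : op3 R N) I J :
  ef3 (A *m B) I J = \sum_K ef3 A I K * ef3 B K J.
Proof. by rewrite /ef3 mxE sum_rank. Qed.

Definition dl (J K : T3) : C := (J == K)%:R.

Lemma sum_dl (K : T3) (F : T3 -> C) : \sum_J (dl J K * F J) = F K.
Proof. exact: sum_delta. Qed.

Lemma pd_mul (A B : op3 R N) (p q : T3 -> C) (sg : T3 -> T3) :
  (forall I J, ef3 A I J = p I * dl J I + q I * dl J (sg I)) ->
  forall I J, ef3 (A *m B) I J = p I * ef3 B I J + q I * ef3 B (sg I) J.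
Proof.
move=> H I J; rewrite ef3_mul.
under eq_bigr do rewrite H mulrDl -!mulrA (mulrCA (p I)) (mulrCA (q I)).
by rewrite big_split /= !sum_dl.
Qed.

Lemma dl_eq (a b c a' b' c' : 'I_N) :
  ((c == c') && ((a == a') && (b == b')))%:R = dl ((a, b), c) ((a', b'), c') :> C.
Proof. by rewrite /dl !xpair_eqE andbC. Qed.

Lemma ef3_lift12 (al be : 'I_N -> 'I_N -> 'I_N -> C) i1 i2 i3 J :
  ef3 (lift12 (fun k => sp2 (al k) (be k))) ((i1, i2), i3) J =
  al i3 i1 i2 * dl J ((i1, i2), i3) + be i3 i1 i2 * dl J ((i2, i1), i3).
Proof.
case: J => -[j1 j2] j3.
rewrite /ef3 /lift12 mxE !enum_rankK.
change (sp2 _ _ (idx2 i1 i2) (idx2 j1 j2)) with (ef2 (sp2 (al i3) (be i3)) i1 i2 j1 j2).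
rewrite ef2_sp2 /dl !xpair_eqE (eq_sym i3).
by case: (j3 == i3); rewrite /= ?andbT ?andbF ?mulr1 ?mulr0 ?addr0.
Qed.

Lemma ef3_lift13 (al be : 'I_N -> 'I_N -> 'I_N -> C) i1 i2 i3 J :
  ef3 (lift13 (fun k => sp2 (al k) (be k))) ((i1, i2), i3) J =
  al i2 i1 i3 * dl J ((i1, i2), i3) + be i2 i1 i3 * dl J ((i3, i2), i1).
Proof.
case: J => -[j1 j2] j3.
rewrite /ef3 /lift13 mxE !enum_rankK.
change (sp2 _ _ (idx2 i1 i3) (idx2 j1 j3)) with (ef2 (sp2 (al i2) (be i2)) i1 i3 j1 j3).
rewrite ef2_sp2 /dl !xpair_eqE.
case: (i2 =P j2) => [<-|/eqP h].
  by rewrite eqxx !andbT mulr1.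
have -> : (j2 == i2) = false by rewrite eq_sym; exact: negbTE.
by rewrite /= !andbF /= !mulr0 addr0.
Qed.

Lemma ef3_lift23 (al be : 'I_N -> 'I_N -> 'I_N -> C) i1 i2 i3 J :
  ef3 (lift23 (fun k => sp2 (al k) (be k))) ((i1, i2), i3) J =
  al i1 i2 i3 * dl J ((i1, i2), i3) + be i1 i2 i3 * dl J ((i1, i3), i2).
Proof.
case: J => -[j1 j2] j3.
rewrite /ef3 /lift23 mxE !enum_rankK.
change (sp2 _ _ (idx2 i2 i3) (idx2 j2 j3)) with (ef2 (sp2 (al i1) (be i1)) i2 i3 j2 j3).
rewrite ef2_sp2 /dl !xpair_eqE.
case: (i1 =P j1) => [<-|/eqP h].
  by rewrite eqxx /= mulr1.
have -> : (j1 == i1) = false by rewrite eq_sym; exact: negbTE.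
by rewrite /= !mulr0 addr0.
Qed.

Definition sw12 (I : T3) : T3 := ((I.1.2, I.1.1), I.2).
Definition sw13 (I : T3) : T3 := ((I.2, I.1.2), I.1.1).
Definition sw23 (I : T3) : T3 := ((I.1.1, I.2), I.1.2).

Lemma lift12_gen (al be : 'I_N -> 'I_N -> 'I_N -> C) I J :
  ef3 (lift12 (fun k => sp2 (al k) (be k))) I J =
  al I.2 I.1.1 I.1.2 * dl J I + be I.2 I.1.1 I.1.2 * dl J (sw12 I).
Proof. by case: I => -[i1 i2] i3; rewrite ef3_lift12. Qed.
Lemma lift13_gen (al be : 'I_N -> 'I_N -> 'I_N -> C) I J :
  ef3 (lift13 (fun k => sp2 (al k) (be k))) I J =
  al I.1.2 I.1.1 I.2 * dl J I + be I.1.2 I.1.1 I.2 * dl J (sw13 I).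
Proof. by case: I => -[i1 i2] i3; rewrite ef3_lift13. Qed.
Lemma lift23_gen (al be : 'I_N -> 'I_N -> 'I_N -> C) I J :
  ef3 (lift23 (fun k => sp2 (al k) (be k))) I J =
  al I.1.1 I.1.2 I.2 * dl J I + be I.1.1 I.1.2 I.2 * dl J (sw23 I).
Proof. by case: I => -[i1 i2] i3; rewrite ef3_lift23. Qed.

Definition D0 (y : 'I_N -> C) (a b : 'I_N) : C := y a - y b.
Definition Dk (y : 'I_N -> C) (k a b : 'I_N) : C :=
  y a - y b + 2 * (a == k)%:R - 2 * (b == k)%:R.

Lemma ne_aux (x t e : C) : x != t -> x - t = e -> e != 0.
Proof. by move=> H <-; rewrite subr_eq0. Qed.

Arguments dl : simpl never.
Arguments Mal : simpl never.
Arguments Mbe : simpl never.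
Arguments kk : simpl never.
Arguments Dk : simpl never.
Arguments D0 : simpl never.

Ltac splitb3 := repeat match goal with
 | H : ?x <> ?x |- _ => by case: H
 | |- context [?x == ?y] => case: (x =P y) => [?|?]; try subst
end.

Ltac splitlt := repeat match goal with
 | |- context [(?x < ?y)%N] => case: (ltnP x y) => ?
end.

Ltac natneq := repeat match goal with
 | H : ?x <> ?y |- _ =>
   match goal with
   | _ : nat_of_ord x <> nat_of_ord y |- _ => fail 1
   | _ => let H' := fresh "nn" in
          have H' : nat_of_ord x <> nat_of_ord y by move/val_inj; exact: H
   end
 end.

Ltac disch gen :=
  match goal with
  | |- is_true ((_ != 0) && _) => apply/andP; split; disch gen
  | |- is_true (?e != 0) =>
    match goal with H : ?x <> ?y |- _ =>
      let h0 := fresh "h0" in let h2 := fresh "h2" in let hm2 := fresh "hm" in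
      destruct (gen x y (introN eqP H)) as [h0 h2 hm2];
      first [apply: (ne_aux h0); ring | apply: (ne_aux h2); ring | apply: (ne_aux hm2); ring]
    end
  end.

Lemma core (y : 'I_N -> C)
  (gen : forall a b : 'I_N, a != b ->
     [/\ y a - y b != 0, y a - y b != 2 & y a - y b != -2]) (u v : C) :
  lift12 (fun k => Msp u (Dk y k)) *m (lift13 (fun _ => Msp (u + v) (D0 y)) *m
     lift23 (fun k => Msp v (Dk y k))) =
  lift23 (fun _ => Msp v (D0 y)) *m (lift13 (fun k => Msp (u + v) (Dk y k)) *m
     lift12 (fun _ => Msp u (D0 y))).
Proof.
apply: ef3_ext => I J; rewrite /Msp.
rewrite (pd_mul _ (lift12_gen _ _)) !(pd_mul _ (lift13_gen _ _)) !lift23_gen.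
rewrite (pd_mul _ (lift23_gen _ _)) !(pd_mul _ (lift13_gen _ _)) !lift12_gen.
case: I => -[a b] c; rewrite /sw12 /sw13 /sw23 /=.
rewrite /Mal /Mbe /kk /Dk /D0.
splitb3; splitlt; natneq; try (exfalso; lia); rewrite /=.
all: try first [ring | (field; disch gen)].

Qed.
End Three.

Section Final.
Variable R : realType.
Local Notation C := R[i].
Variable N : nat.

Lemma lift12Z (c : C) (f : 'I_N -> op2 R N) :
  lift12 (fun k => c *: f k) = c *: lift12 f.
Proof.
apply/matrixP => i j; rewrite [RHS]mxE /lift12 !mxE.
case: (enum_val i) => -[i1 i2] i3; case: (enum_val j) => -[j1 j2] j3.
by rewrite mxE mulrA.
Qed.
Lemma lift13Z (c : C) (f : 'I_N -> op2 R N) :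
  lift13 (fun k => c *: f k) = c *: lift13 f.
Proof.
apply/matrixP => i j; rewrite [RHS]mxE /lift13 !mxE.
case: (enum_val i) => -[i1 i2] i3; case: (enum_val j) => -[j1 j2] j3.
by rewrite mxE mulrA.
Qed.
Lemma lift23Z (c : C) (f : 'I_N -> op2 R N) :
  lift23 (fun k => c *: f k) = c *: lift23 f.
Proof.
apply/matrixP => i j; rewrite [RHS]mxE /lift23 !mxE.
case: (enum_val i) => -[i1 i2] i3; case: (enum_val j) => -[j1 j2] j3.
by rewrite mxE mulrA.
Qed.
Lemma Msp_ext (u : C) (D D' : 'I_N -> 'I_N -> C) :
  (forall a b, D a b = D' a b) -> Msp u D = Msp u D'.
Proof.
move=> H; have -> : D = D' by apply/funext => a; apply/funext => b; exact: H.
by [].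
Qed.
End Final.

Theorem mainTheorem2 (R : realType) (N : nat) (s : 'I_N.-1 -> R[i]) :
  (2 <= N)%N ->
  (* genericity of s *)
  (forall a b : 'I_N, a != b ->
     [/\ xvar s a - xvar s b != 0, xvar s a - xvar s b != 2
       & xvar s a - xvar s b != -2]) ->
  (* entries of R(u,s) *)
  (forall (u : R[i]), u + 1 != 0 ->
     forall i1 i2 j1 j2 : 'I_N,
       entry2 (Rdyn u s) i1 i2 j1 j2 =
       if (i1 == i2) && (j1 == i1) && (j2 == i1) then rho N u
       else if (i1 != i2) && (j1 == i1) && (j2 == i2) then
         (if (i1 < i2)%N then rho N u * (u / (u + 1))
          else rho N u * ((1 - 4 / (xvar s i1 - xvar s i2) ^+ 2) * (u / (u + 1))))
       else if (i1 != i2) && (j1 == i2) && (j2 == i1) then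
         rho N u * ((1 + 2 * u / (xvar s i1 - xvar s i2)) * (1 / (u + 1)))
       else 0)
  /\
  (* dynamical Yang--Baxter equation *)
  (forall beta beta' : R[i],
     lift12 (fun k => Rdyn beta (sshift s k)) *m
     lift13 (fun _ => Rdyn (beta + beta') s) *m
     lift23 (fun k => Rdyn beta' (sshift s k))
     =
     lift23 (fun _ => Rdyn beta' s) *m
     lift13 (fun k => Rdyn (beta + beta') (sshift s k)) *m
     lift12 (fun _ => Rdyn beta s)).
Proof.
move=> N2 gen; split; first exact: (part1 gen).
move=> b b'.
have E1 : forall u, (fun k => Rdyn u (sshift s k)) =
   (fun k => (rho N u / (u + 1)) *: Msp u (Dk (xvar s) k)).
  move=> u; apply/funext => k; rewrite Rdyn_sp (@Msp_ext _ _ _ _ (Dk (xvar s) k)) //.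
  by move=> a c; rewrite xdiff_shift.
have E0 : forall u, (fun _ : 'I_N => Rdyn u s) =
   (fun _ => (rho N u / (u + 1)) *: Msp u (D0 (xvar s))).
  by move=> u; apply/funext => k; rewrite Rdyn_sp (@Msp_ext _ _ _ _ (D0 (xvar s))).
have L12 : forall u, lift12 (fun k => Rdyn u (sshift s k)) =
  (rho N u / (u + 1)) *: lift12 (fun k => Msp u (Dk (xvar s) k)) by move=> u; rewrite E1 lift12Z.
have L13 : forall u, lift13 (fun k => Rdyn u (sshift s k)) =
  (rho N u / (u + 1)) *: lift13 (fun k => Msp u (Dk (xvar s) k)) by move=> u; rewrite E1 lift13Z.
have L23 : forall u, lift23 (fun k => Rdyn u (sshift s k)) =
  (rho N u / (u + 1)) *: lift23 (fun k => Msp u (Dk (xvar s) k)) by move=> u; rewrite E1 lift23Z.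
have K12 : forall u, lift12 (fun _ => Rdyn u s) =
  (rho N u / (u + 1)) *: lift12 (fun _ => Msp u (D0 (xvar s))) by move=> u; rewrite E0 lift12Z.
have K13 : forall u, lift13 (fun _ => Rdyn u s) =
  (rho N u / (u + 1)) *: lift13 (fun _ => Msp u (D0 (xvar s))) by move=> u; rewrite E0 lift13Z.
have K23 : forall u, lift23 (fun _ => Rdyn u s) =
  (rho N u / (u + 1)) *: lift23 (fun _ => Msp u (D0 (xvar s))) by move=> u; rewrite E0 lift23Z.
Opaque sshift.
rewrite (L12 b) (K13 (b + b')) (L23 b') (K23 b') (L13 (b + b')) (K12 b).
rewrite -!mulmxA -!scalemxAl -!scalemxAr !scalerA (core gen).
match goal with |- ?x *: ?M = ?y *: _ => have -> : y = x by ring end.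
by [].
Qed.
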